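(* Let $(a_n)_{n\ge 1}$ be a sequence of strictly positive real numbers with $\sum_{n\ge1}(1+n^2)^5a_n^2<\infty$. Let $H=\mathbb{R}\times l^2\times l^2$ and let $F:H\to H$ be defined, for $y=(x,(u_n)_{n\ge1},(v_n)_{n\ge1})\in H$, by $$F(y)=\Big(\sum_{n\ge1} n a_n^{1/2}\big(\sin(nx)u_n+\cos(nx)v_n\big),\ \big(a_n^{1/2}\cos(nx)\big)_{n\ge1},\ \big(-a_n^{1/2}\sin(nx)\big)_{n\ge1}\Big).$$ Let $W$ be a cylindrical Wiener process on $H$ and $\sigma$ the projection onto the first coordinate. For $N\ge1$ define $\Pi_N:H\to H$ by $\Pi_N(x,(u_n)_n,(v_n)_n)=(x,(u_1,\dots,u_N,0,0,\dots),(v_1,\dots,v_N,0,0,\dots))$. Fix $y\in H$, let $Y$ be the strong solution of $dY_t=F(Y_t)\,dt+\sigma\,dW_t$, $Y_0=y$, and let $Y^{(N)}$ be the strong solution of the (finite-dimensional) equation $dY^{(N)}_t=\Pi_N F(Y^{(N)}_t)\,dt+\sigma\,dW_t$, $Y^{(N)}_0=\Pi_N y$, driven by the same $W$. Then for all $T>0$ and all $\omega\in\Omega$, $$\lim_{N\to\infty}\sup_{0\le t\le T}\|Y^{(N)}(t)-Y(t)\|_H^2=0.$$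
   Context: $H=\mathbb{R}\times l^2\times l^2$ is the Hilbert space with norm $\|y\|_H^2=|x|^2+\|(u_n)_n\|_{l^2}^2+\|(v_n)_n\|_{l^2}^2$. $\sigma W_t=(\beta_t,0,0)$ with $\beta$ a standard one-dimensional Brownian motion. The equation for $Y^{(N)}$ lives in $\mathbb{R}\times\mathbb{R}^N\times\mathbb{R}^N$ (identified with a subspace of $H$) and has a unique strong solution. *)

(* Defs.v *)
From Stdlib Require Import Reals Lra.
From Coquelicot Require Import Coquelicot.
Open Scope R_scope.

(* Indexing convention: a sequence (w_n)_{n>=1} is represented by
   w : nat -> R with w k standing for w_{k+1}.  So the paper's index n
   corresponds to k = n - 1, and the factor n is INR (S k). *)
Definition idx (k : nat) : R := INR (S k).

Definition in_l2 (w : nat -> R) : Prop := ex_series (fun k => (w k) ^ 2).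

Definition in_H (x : R) (u v : nat -> R) : Prop := in_l2 u /\ in_l2 v.

Definition Hdist2 (x : R) (u v : nat -> R) (x' : R) (u' v' : nat -> R) : R :=
  (x - x') ^ 2 + Series (fun k => (u k - u' k) ^ 2)
               + Series (fun k => (v k - v' k) ^ 2).

Definition F1 (a : nat -> R) (x : R) (u v : nat -> R) : R :=
  Series (fun k => idx k * sqrt (a k) *
                   (sin (idx k * x) * u k + cos (idx k * x) * v k)).
Definition F2 (a : nat -> R) (x : R) (k : nat) : R := sqrt (a k) * cos (idx k * x).
Definition F3 (a : nat -> R) (x : R) (k : nat) : R := - (sqrt (a k) * sin (idx k * x)).

(* truncation by Pi_N on a sequence component: keeps indices n = 1..N,
   i.e. k < N *)
Definition trunc (N : nat) (w : nat -> R) : nat -> R :=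
  fun k => if (k <? N)%nat then w k else 0.

Definition H_path_continuous (X : R -> R) (U V : R -> nat -> R) : Prop :=
  (forall t, 0 <= t -> in_H (X t) (U t) (V t)) /\
  (forall t, 0 <= t -> forall eps, 0 < eps -> exists delta, 0 < delta /\
     forall s, 0 <= s -> Rabs (s - t) < delta ->
       Hdist2 (X s) (U s) (V s) (X t) (U t) (V t) < eps).

(* Pathwise (strong) solution, for the given noise path beta, of
     dY = P(F(Y)) dt + sigma dW,  Y_0 = (x0,u0,v0),
   where sigma W_t = (beta_t, 0, 0) and P is either the identity
   (full = None) or Pi_N (full = Some N).  With additive noise the
   equation is the integral equation
     Y_t = Y_0 + \int_0^t P F(Y_s) ds + (beta_t,0,0),
   written coordinatewise (the coordinate functionals separate H). *)
Definition proj_coord (P : option nat) (k : nat) (r : R) : R :=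
  match P with None => r | Some N => if (k <? N)%nat then r else 0 end.

Definition is_solution (a : nat -> R) (P : option nat) (beta : R -> R)
  (x0 : R) (u0 v0 : nat -> R) (X : R -> R) (U V : R -> nat -> R) : Prop :=
  H_path_continuous X U V /\
  X 0 = x0 /\ (forall k, U 0 k = u0 k) /\ (forall k, V 0 k = v0 k) /\
  (forall t, 0 <= t ->
     ex_RInt (fun s => F1 a (X s) (U s) (V s)) 0 t /\
     X t = x0 + RInt (fun s => F1 a (X s) (U s) (V s)) 0 t + beta t) /\
  (forall t k, 0 <= t ->
     ex_RInt (fun s => proj_coord P k (F2 a (X s) k)) 0 t /\
     U t k = u0 k + RInt (fun s => proj_coord P k (F2 a (X s) k)) 0 t) /\
  (forall t k, 0 <= t ->
     ex_RInt (fun s => proj_coord P k (F3 a (X s) k)) 0 t /\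
     V t k = v0 k + RInt (fun s => proj_coord P k (F3 a (X s) k)) 0 t).

(* Main.v *)
Require Import Defs.
From Stdlib Require Import Reals Lra Lia.
From Coquelicot Require Import Coquelicot.
Open Scope R_scope.

Lemma idx_ge1 k : 1 <= idx k.
Proof. unfold idx. rewrite S_INR. pose proof (pos_INR k). lra. Qed.

Lemma inv_sq_series : ex_series (fun k => / idx k ^ 2).
Proof.
  assert (Hb : forall n, sum_f_R0 (fun k => / idx k ^ 2) n <= 2 - / INR (S n)).
  { induction n as [|n IH].
    - simpl. unfold idx. simpl. lra.
    - replace (sum_f_R0 _ (S n)) with (sum_f_R0 (fun k => / idx k ^ 2) n + / idx (S n) ^ 2) by reflexivity.
      unfold idx in *.
      assert (H1 : / INR (S n) - / INR (S (S n)) >= / INR (S (S n)) ^ 2).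
      { rewrite !S_INR. pose proof (pos_INR n).
        assert (E : / (INR n + 1) - / (INR n + 1 + 1) - / (INR n + 1 + 1) ^ 2
                  = / ((INR n + 1) * (INR n + 1 + 1) ^ 2)) by (field; lra).
        assert (0 < / ((INR n + 1) * (INR n + 1 + 1) ^ 2)) by (apply Rinv_0_lt_compat; nra).
        lra. }
      lra. }
  destruct (growing_cv (sum_f_R0 (fun k => / idx k ^ 2))) as [l Hl].
  - intro n. change (sum_f_R0 (fun k => / idx k ^ 2) (S n)) with (sum_f_R0 (fun k => / idx k ^ 2) n + / idx (S n) ^ 2).
    assert (0 < / idx (S n) ^ 2).
    { apply Rinv_0_lt_compat. pose proof (idx_ge1 (S n)). nra. } lra.
  - exists 2. intros x [n ->]. pose proof (Hb n).
    assert (0 < / INR (S n)) by (apply Rinv_0_lt_compat, lt_0_INR; lia). lra.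
  - exists l. apply is_series_Reals. exact Hl.
Qed.

Lemma sin_lip x y : Rabs (sin x - sin y) <= Rabs (x - y).
Proof.
  destruct (MVT_abs sin cos y x) as [c [Hc _]].
  { intros; apply derivable_pt_lim_sin. }
  rewrite Hc. pose proof (COS_bound c). rewrite <- (Rmult_1_l (Rabs (x - y))) at 2.
  apply Rmult_le_compat_r; [apply Rabs_pos|]. apply Rabs_le. lra.
Qed.

Lemma cos_lip x y : Rabs (cos x - cos y) <= Rabs (x - y).
Proof.
  destruct (MVT_abs cos (fun t => - sin t) y x) as [c [Hc _]].
  { intros; apply derivable_pt_lim_cos. }
  rewrite Hc. pose proof (SIN_bound c). rewrite <- (Rmult_1_l (Rabs (x - y))) at 2.
  apply Rmult_le_compat_r; [apply Rabs_pos|]. apply Rabs_le. lra.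
Qed.

Lemma Series_zero : Series (fun _ => 0) = 0.
Proof.
  rewrite (Series_ext _ (fun n => 0 * 0)) by (intros; ring).
  rewrite Series_scal_l. ring.
Qed.

Lemma ser_bound (f b : nat -> R) : (forall k, Rabs (f k) <= b k) -> ex_series b ->
  ex_series f /\ Rabs (Series f) <= Series b.
Proof.
  intros Hf Hb.
  assert (Ha : ex_series (fun n => Rabs (f n))).
  { apply (@ex_series_le R_AbsRing R_CompleteNormedModule _ b); auto. intro n.
    change (norm (Rabs (f n))) with (Rabs (Rabs (f n))). rewrite Rabs_Rabsolu. auto. }
  split. apply ex_series_Rabs; auto.
  eapply Rle_trans. apply Series_Rabs; auto.
  apply Series_le; auto. intro n; split; auto. apply Rabs_pos.
Qed.

Lemma Series_nonneg (b : nat -> R) : (forall k, 0 <= b k) -> ex_series b -> 0 <= Series b.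
Proof.
  intros H Hb. rewrite <- Series_zero. apply Series_le; auto. intros; split; auto; lra.
Qed.

Definition tail (N : nat) (d : nat -> R) : nat -> R :=
  fun k => if (k <? N)%nat then 0 else d k.

Lemma tail_le N d k : (forall k, 0 <= d k) -> 0 <= tail N d k <= d k.
Proof. intros H; unfold tail; destruct (k <? N)%nat; pose proof (H k); lra. Qed.

Lemma tail_ex N d : (forall k, 0 <= d k) -> ex_series d -> ex_series (tail N d).
Proof.
  intros H Hd. apply (@ex_series_le R_AbsRing R_CompleteNormedModule _ d); auto. intro n.
  change (norm (tail N d n)) with (Rabs (tail N d n)). pose proof (tail_le N d n H).
  rewrite Rabs_pos_eq; lra.
Qed.

Lemma tail_small d : (forall k, 0 <= d k) -> ex_series d ->
  forall delta, 0 < delta -> exists N0, forall N, (N0 <= N)%nat -> Series (tail N d) < delta.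
Proof.
  intros H Hd delta Hdel.
  pose proof (Series_correct _ Hd) as Hs. apply is_series_Reals in Hs.
  destruct (Hs delta Hdel) as [N1 HN1].
  exists (S N1). intros N HN.
  assert (HNp : (0 < N)%nat) by lia.
  pose proof (Series_incr_n (tail N d) N HNp (tail_ex N d H Hd)) as E1.
  pose proof (Series_incr_n d N HNp Hd) as E2.
  assert (Z : forall m, (m < N)%nat -> sum_f_R0 (tail N d) m = 0).
  { induction m; intros Hm.
    - change (sum_f_R0 (tail N d) 0) with (tail N d 0). unfold tail.
      replace (0 <? N)%nat with true by (symmetry; apply Nat.ltb_lt; lia). lra.
    - change (sum_f_R0 (tail N d) (S m)) with (sum_f_R0 (tail N d) m + tail N d (S m)).
      rewrite IHm by lia. unfold tail. replace (S m <? N)%nat with true by (symmetry; apply Nat.ltb_lt; lia). lra. }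
  rewrite Z in E1 by lia.
  rewrite (Series_ext (fun k => tail N d (N + k)%nat) (fun k => d (N + k)%nat)) in E1.
  2:{ intro n; unfold tail. replace (N + n <? N)%nat with false by (symmetry; apply Nat.ltb_ge; lia). auto. }
  specialize (HN1 (pred N) ltac:(lia)). unfold Rdist in HN1.
  apply Rabs_def2 in HN1. lra.
Qed.

Lemma RInt_abs_le (f g : R -> R) t : 0 <= t -> ex_RInt f 0 t -> ex_RInt g 0 t ->
  (forall r, 0 <= r <= t -> Rabs (f r) <= g r) -> Rabs (RInt f 0 t) <= RInt g 0 t.
Proof.
  intros Ht Hf Hg H.
  assert (H1 : RInt f 0 t <= RInt g 0 t).
  { apply RInt_le; auto. intros x Hx.
    destruct (Rabs_le_between (f x) (g x)) as [A _]. specialize (A (H x ltac:(lra))). lra. }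
  assert (Hog : ex_RInt (fun r => opp (g r)) 0 t) by (apply (@ex_RInt_opp R_NormedModule); auto).
  assert (H2 : RInt (fun r => opp (g r)) 0 t <= RInt f 0 t).
  { apply RInt_le; auto. intros x Hx.
    destruct (Rabs_le_between (f x) (g x)) as [A _]. specialize (A (H x ltac:(lra))).
    change (opp (g x)) with (- g x). lra. }
  rewrite (@RInt_opp R_CompleteNormedModule) in H2 by auto. change (opp (RInt g 0 t)) with (- RInt g 0 t) in H2.
  apply Rabs_le. lra.
Qed.

Lemma exp_int lam t : 0 < lam ->
  is_RInt (fun r => exp (lam * r)) 0 t ((exp (lam * t) - 1) / lam).
Proof.
  intros Hl.
  assert (H := is_RInt_derive (fun r => exp (lam * r) / lam) (fun r => exp (lam * r)) 0 t).
  replace ((exp (lam * t) - 1) / lam) with (exp (lam * t) / lam - exp (lam * 0) / lam).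
  2:{ rewrite Rmult_0_r, exp_0. field. lra. }
  apply H.
  - intros x _. auto_derive; auto. field. lra.
  - intros x _. apply (@ex_derive_continuous R_AbsRing R_NormedModule). auto_derive. auto.
Qed.

Lemma exp_ge1 x : 0 <= x -> 1 <= exp x.
Proof. intros. pose proof (exp_ineq1_le x). lra. Qed.

Lemma gronwall_abs (T C tau G0 : R) (e D : R -> R) :
  0 < T -> 0 <= C -> 0 <= tau -> 0 <= G0 ->
  (forall t, 0 <= t <= T -> ex_RInt D 0 t /\ e t = RInt D 0 t) ->
  (forall t, 0 <= t <= T -> Rabs (e t) <= G0) ->
  (forall G, 0 <= G -> (forall s, 0 <= s <= T -> Rabs (e s) <= G * exp ((2*C+1) * s)) ->
     forall r, 0 <= r <= T -> Rabs (D r) <= C * G * exp ((2*C+1) * r) + tau) ->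
  forall m t, 0 <= t <= T -> Rabs (e t) <= (G0 / 2 ^ m + 2 * T * tau) * exp ((2*C+1) * t).
Proof.
  intros HT HC Htau HG0 HD He0 Hlip.
  set (lam := 2*C+1). assert (Hlam : 0 < lam) by (unfold lam; lra).
  induction m; intros t Ht.
  - simpl. pose proof (exp_ge1 (lam * t) ltac:(apply Rmult_le_pos; lra)).
    pose proof (He0 t Ht). replace (G0 / 1) with G0 by field.
    assert (0 <= 2 * T * tau) by nra.
    assert (0 <= G0 * (exp (lam * t) - 1)) by (apply Rmult_le_pos; lra).
    assert (0 <= 2 * T * tau * exp (lam * t)) by (apply Rmult_le_pos; lra).
    nra.
  - set (G := G0 / 2 ^ m + 2 * T * tau).
    assert (HG : 0 <= G).
    { unfold G. assert (0 < 2 ^ m) by (apply pow_lt; lra).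
      assert (0 <= G0 / 2 ^ m) by (apply Rdiv_le_0_compat; lra). nra. }
    destruct (HD t Ht) as [HDi Het]. rewrite Het.
    set (gf := fun r => C * G * exp (lam * r) + tau).
    assert (Hgi : is_RInt gf 0 t (C * G * ((exp (lam * t) - 1) / lam) + (t - 0) * tau)).
    { apply (@is_RInt_plus R_NormedModule (fun r => C * G * exp (lam * r)) (fun _ => tau)).
      - apply (@is_RInt_scal R_NormedModule (fun r => exp (lam * r))). apply exp_int; auto.
      - apply (@is_RInt_const R_NormedModule). }
    eapply Rle_trans. apply (RInt_abs_le D gf t); try lra; auto.
    eexists; exact Hgi.
    intros r Hr. apply Hlip; auto. lra.
    rewrite (is_RInt_unique _ _ _ _ Hgi).
    set (E := exp (lam * t)).
    assert (HE : 1 <= E) by (apply exp_ge1; apply Rmult_le_pos; lra).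
    assert (H2 : 2 ^ S m = 2 * 2 ^ m) by reflexivity.
    assert (Hpm : 0 < 2 ^ m) by (apply pow_lt; lra).
    assert (HCl : C * G * ((E - 1) / lam) <= G / 2 * E).
    { assert (Ek : C * G * ((E - 1) / lam) = (C / lam) * (G * (E - 1))) by (field; lra).
      assert (Hk : C / lam = 1/2 - / (2 * lam)) by (unfold lam; field; lra).
      assert (0 < / (2 * lam)) by (apply Rinv_0_lt_compat; lra).
      assert (0 <= C / lam) by (apply Rdiv_le_0_compat; lra).
      assert (0 <= G * (E - 1)) by (apply Rmult_le_pos; lra).
      rewrite Ek. apply Rle_trans with (1/2 * (G * (E - 1))).
      apply Rmult_le_compat_r; lra. nra. }
    assert (G0 / 2 ^ S m + 2 * T * tau = G / 2 + T * tau).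
    { unfold G. rewrite H2. field. lra. }
    rewrite H.
    assert (t * tau <= T * tau) by (apply Rmult_le_compat_r; lra).
    assert (0 <= T * tau) by (apply Rmult_le_pos; lra).
    assert (T * tau <= T * tau * E) by (rewrite <- (Rmult_1_r (T * tau)) at 1; apply Rmult_le_compat_l; lra).
    lra.
Qed.

Lemma ex_series_plusR (f g : nat -> R) : ex_series f -> ex_series g -> ex_series (fun k => f k + g k).
Proof. intros. apply (@ex_series_plus R_AbsRing R_NormedModule); auto. Qed.

Lemma ex_series_leR (f b : nat -> R) : (forall k, 0 <= f k <= b k) -> ex_series b -> ex_series f.
Proof.
  intros H Hb. apply (@ex_series_le R_AbsRing R_CompleteNormedModule _ b); auto.
  intro n. change (norm (f n)) with (Rabs (f n)). destruct (H n). rewrite Rabs_pos_eq; lra.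
Qed.

Lemma q_series a : (forall k, 0 < a k) ->
  ex_series (fun k => (1 + idx k ^ 2) ^ 5 * (a k) ^ 2) ->
  ex_series (fun k => idx k ^ 4 * a k).
Proof.
  intros Ha Hs.
  apply (ex_series_leR _ (fun k => (1 + idx k ^ 2) ^ 5 * (a k) ^ 2 + / idx k ^ 2)).
  2:{ apply ex_series_plusR; auto. apply inv_sq_series. }
  intro k. pose proof (idx_ge1 k) as Hn. pose proof (Ha k) as Hak.
  set (n := idx k) in *. split. apply Rmult_le_pos; [apply pow_le|]; lra.
  set (y := / n). set (m := n ^ 5 * a k).
  assert (E1 : n ^ 4 * a k = m * y) by (unfold m, y; field; lra).
  assert (E2 : / n ^ 2 = y ^ 2) by (unfold y; field; lra).
  assert (E3 : n ^ 10 * a k ^ 2 = m ^ 2) by (unfold m; ring).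
  assert (E4 : n ^ 10 <= (1 + n ^ 2) ^ 5).
  { replace (n ^ 10) with ((n ^ 2) ^ 5) by ring. apply pow_incr. split; [apply pow_le|]; lra. }
  assert (E5 : n ^ 10 * a k ^ 2 <= (1 + n ^ 2) ^ 5 * a k ^ 2).
  { apply Rmult_le_compat_r; [apply pow_le|]; lra. }
  assert (0 <= m * y).
  { rewrite <- E1. apply Rmult_le_pos; [apply pow_le|]; lra. }
  rewrite E1, E2. nra.
Qed.

Definition dd (a u0 v0 : nat -> R) (T : R) (k : nat) : R :=
  idx k * sqrt (a k) * (Rabs (u0 k) + Rabs (v0 k)) + 2 * idx k * a k * T.
Definition cc (a u0 v0 : nat -> R) (T : R) (k : nat) : R :=
  idx k ^ 2 * sqrt (a k) * (Rabs (u0 k) + Rabs (v0 k)) + 4 * idx k ^ 2 * a k * T.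

Lemma dd_cc a u0 v0 T k : (forall k, 0 < a k) -> 0 <= T -> 0 <= dd a u0 v0 T k <= cc a u0 v0 T k.
Proof.
  intros Ha HT. unfold dd, cc. pose proof (idx_ge1 k). pose proof (Ha k).
  pose proof (sqrt_pos (a k)). pose proof (Rabs_pos (u0 k)). pose proof (Rabs_pos (v0 k)).
  set (n := idx k) in *. set (s := sqrt (a k)) in *. set (A := Rabs (u0 k) + Rabs (v0 k)).
  assert (0 <= A) by (unfold A; lra).
  assert (n <= n ^ 2) by nra.
  assert (0 <= n * s * A) by (repeat apply Rmult_le_pos; lra).
  assert (0 <= n * a k * T) by (repeat apply Rmult_le_pos; lra).
  assert (n * s * A <= n ^ 2 * s * A) by (apply Rmult_le_compat_r; [lra|]; apply Rmult_le_compat_r; lra).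
  assert (n * a k * T <= n ^ 2 * a k * T) by (apply Rmult_le_compat_r; [lra|]; apply Rmult_le_compat_r; lra).
  lra.
Qed.

Lemma cc_series a u0 v0 T : (forall k, 0 < a k) -> 0 <= T ->
  ex_series (fun k => idx k ^ 4 * a k) -> in_l2 u0 -> in_l2 v0 -> ex_series (cc a u0 v0 T).
Proof.
  intros Ha HT Hq Hu Hv.
  apply (ex_series_leR _ (fun k => idx k ^ 4 * a k * (1 + 4 * T) + (u0 k ^ 2 + v0 k ^ 2) / 2)).
  2:{ apply ex_series_plusR. apply ex_series_scal_r; auto.
      apply (ex_series_ext (fun k => u0 k ^ 2 * /2 + v0 k ^ 2 * / 2)). intros; lra.
      apply ex_series_plusR; apply ex_series_scal_r; auto. }
  intro k. split. pose proof (dd_cc a u0 v0 T k Ha HT); lra.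
  unfold cc. pose proof (idx_ge1 k). pose proof (Ha k).
  pose proof (sqrt_pos (a k)). pose proof (sqrt_sqrt (a k) ltac:(lra)) as Hss.
  pose proof (Rabs_pos (u0 k)). pose proof (Rabs_pos (v0 k)).
  rewrite <- (pow2_abs (u0 k)), <- (pow2_abs (v0 k)).
  set (n := idx k) in *. set (s := sqrt (a k)) in *. set (u := Rabs (u0 k)) in *. set (v := Rabs (v0 k)) in *.
  assert (n ^ 2 <= n ^ 4) by (assert (1 <= n ^ 2) by nra; replace (n ^ 4) with (n ^ 2 * n ^ 2) by ring; nra).
  assert (K1 : 2 * (n ^ 2 * s * u) <= n ^ 4 * a k + u ^ 2).
  { replace (n ^ 4 * a k) with ((n ^ 2 * s) ^ 2) by (rewrite <- Hss; ring). pose proof (pow2_ge_0 (n ^ 2 * s - u)). nra. }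
  assert (K3 : 2 * (n ^ 2 * s * v) <= n ^ 4 * a k + v ^ 2).
  { replace (n ^ 4 * a k) with ((n ^ 2 * s) ^ 2) by (rewrite <- Hss; ring). pose proof (pow2_ge_0 (n ^ 2 * s - v)). nra. }
  assert (4 * n ^ 2 * a k * T <= 4 * n ^ 4 * a k * T).
  { apply Rmult_le_compat_r; [lra|]. apply Rmult_le_compat_r; lra. }
  nra.
Qed.

Lemma dd_series a u0 v0 T : (forall k, 0 < a k) -> 0 <= T ->
  ex_series (cc a u0 v0 T) -> ex_series (dd a u0 v0 T).
Proof. intros Ha HT Hc. apply (ex_series_leR _ (cc a u0 v0 T)); auto. intro; apply dd_cc; auto. Qed.

Lemma proj_abs P k r : Rabs (proj_coord P k r) <= Rabs r.
Proof. destruct P; simpl; [destruct (k <? n)%nat|]; rewrite ?Rabs_R0; try lra; apply Rabs_pos. Qed.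

Lemma sol_U_bound a P beta x0 u0' v0' X U V u0 T :
  is_solution a P beta x0 u0' v0' X U V -> (forall k, Rabs (u0' k) <= Rabs (u0 k)) ->
  forall t k, 0 <= t <= T -> Rabs (U t k) <= Rabs (u0 k) + sqrt (a k) * T.
Proof.
  intros [_ [_ [_ [_ [_ [HU _]]]]]] Hu t k Ht.
  destruct (HU t k (proj1 Ht)) as [Hi ->].
  eapply Rle_trans. apply Rabs_triang.
  pose proof (abs_RInt_le_const _ 0 t (sqrt (a k)) (proj1 Ht) Hi) as H.
  assert (Rabs (RInt (fun s => proj_coord P k (F2 a (X s) k)) 0 t) <= (t - 0) * sqrt (a k)).
  { apply H. intros r _. eapply Rle_trans. apply proj_abs. unfold F2.
    rewrite Rabs_mult, Rabs_pos_eq by apply sqrt_pos. pose proof (COS_bound (idx k * X r)).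
    pose proof (sqrt_pos (a k)).
    assert (Rabs (cos (idx k * X r)) <= 1) by (apply Rabs_le; lra). nra. }
  pose proof (Hu k). pose proof (sqrt_pos (a k)). nra.
Qed.

Lemma sol_V_bound a P beta x0 u0' v0' X U V v0 T :
  is_solution a P beta x0 u0' v0' X U V -> (forall k, Rabs (v0' k) <= Rabs (v0 k)) ->
  forall t k, 0 <= t <= T -> Rabs (V t k) <= Rabs (v0 k) + sqrt (a k) * T.
Proof.
  intros [_ [_ [_ [_ [_ [_ HV]]]]]] Hv t k Ht.
  destruct (HV t k (proj1 Ht)) as [Hi ->].
  eapply Rle_trans. apply Rabs_triang.
  pose proof (abs_RInt_le_const _ 0 t (sqrt (a k)) (proj1 Ht) Hi) as H.
  assert (Rabs (RInt (fun s => proj_coord P k (F3 a (X s) k)) 0 t) <= (t - 0) * sqrt (a k)).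
  { apply H. intros r _. eapply Rle_trans. apply proj_abs. unfold F3.
    rewrite Rabs_Ropp, Rabs_mult, Rabs_pos_eq by apply sqrt_pos. pose proof (SIN_bound (idx k * X r)).
    pose proof (sqrt_pos (a k)).
    assert (Rabs (sin (idx k * X r)) <= 1) by (apply Rabs_le; lra). nra. }
  pose proof (Hv k). pose proof (sqrt_pos (a k)). nra.
Qed.

Lemma term_abs n s x U V A B : 0 <= n -> 0 <= s -> Rabs U <= A -> Rabs V <= B ->
  Rabs (n * s * (sin x * U + cos x * V)) <= n * s * (A + B).
Proof.
  intros Hn Hs HU HV. rewrite Rabs_mult, Rabs_pos_eq by (apply Rmult_le_pos; lra).
  apply Rmult_le_compat_l. apply Rmult_le_pos; lra.
  eapply Rle_trans. apply Rabs_triang. rewrite !Rabs_mult.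
  pose proof (SIN_bound x). pose proof (COS_bound x).
  assert (Rabs (sin x) <= 1) by (apply Rabs_le; lra).
  assert (Rabs (cos x) <= 1) by (apply Rabs_le; lra).
  pose proof (Rabs_pos (sin x)). pose proof (Rabs_pos (cos x)).
  pose proof (Rabs_pos U). pose proof (Rabs_pos V). nra.
Qed.

Lemma F1_sol_bound a P beta x0 u0' v0' X U V u0 v0 T :
  (forall k, 0 < a k) -> 0 <= T ->
  is_solution a P beta x0 u0' v0' X U V -> (forall k, Rabs (u0' k) <= Rabs (u0 k)) ->
  (forall k, Rabs (v0' k) <= Rabs (v0 k)) -> ex_series (dd a u0 v0 T) ->
  forall t, 0 <= t <= T ->
  ex_series (fun k => idx k * sqrt (a k) * (sin (idx k * X t) * U t k + cos (idx k * X t) * V t k)) /\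
  Rabs (F1 a (X t) (U t) (V t)) <= Series (dd a u0 v0 T).
Proof.
  intros Ha HT Hs Hu Hv Hd t Ht. unfold F1. apply ser_bound; auto.
  intro k. eapply Rle_trans. apply term_abs.
  pose proof (idx_ge1 k); lra. apply sqrt_pos.
  apply (sol_U_bound _ _ _ _ _ _ _ _ _ _ T Hs Hu t k Ht).
  apply (sol_V_bound _ _ _ _ _ _ _ _ _ _ T Hs Hv t k Ht).
  unfold dd. pose proof (sqrt_sqrt (a k) ltac:(pose proof (Ha k); lra)). nra.
Qed.

Lemma exp_le x y : x <= y -> exp x <= exp y.
Proof. intros [H|H]. left; apply exp_increasing; auto. subst; lra. Qed.

Lemma abs_mult_le p q P Q : Rabs p <= P -> Rabs q <= Q -> Rabs (p * q) <= P * Q.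
Proof.
  intros. rewrite Rabs_mult. apply Rmult_le_compat; auto; apply Rabs_pos.
Qed.

Lemma diff_term n s x y U U' V V' A B E T :
  0 <= n -> 0 <= s -> 0 <= E -> Rabs (x - y) <= n * E -> Rabs U <= A -> Rabs V <= B ->
  Rabs (U - U') <= T * (s * n * E) -> Rabs (V - V') <= T * (s * n * E) ->
  Rabs (n * s * (sin x * U + cos x * V) - n * s * (sin y * U' + cos y * V'))
    <= n * s * (n * E * A + T * (s * n * E) + n * E * B + T * (s * n * E)).
Proof.
  intros Hn Hs HE Hxy HU HV HdU HdV.
  replace (n * s * (sin x * U + cos x * V) - n * s * (sin y * U' + cos y * V'))
    with (n * s * ((sin x - sin y) * U + sin y * (U - U') + (cos x - cos y) * V + cos y * (V - V'))) by ring.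
  rewrite Rabs_mult, Rabs_pos_eq by (apply Rmult_le_pos; lra).
  apply Rmult_le_compat_l. apply Rmult_le_pos; lra.
  pose proof (SIN_bound y). pose proof (COS_bound y).
  assert (Rabs (sin y) <= 1) by (apply Rabs_le; lra).
  assert (Rabs (cos y) <= 1) by (apply Rabs_le; lra).
  assert (J1 : Rabs ((sin x - sin y) * U) <= n * E * A).
  { apply abs_mult_le; auto. eapply Rle_trans; [apply sin_lip|]; auto. }
  assert (J2 : Rabs (sin y * (U - U')) <= 1 * (T * (s * n * E))) by (apply abs_mult_le; auto).
  assert (J3 : Rabs ((cos x - cos y) * V) <= n * E * B).
  { apply abs_mult_le; auto. eapply Rle_trans; [apply cos_lip|]; auto. }
  assert (J4 : Rabs (cos y * (V - V')) <= 1 * (T * (s * n * E))) by (apply abs_mult_le; auto).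
  set (p1 := (sin x - sin y) * U) in *. set (p2 := sin y * (U - U')) in *.
  set (p3 := (cos x - cos y) * V) in *. set (p4 := cos y * (V - V')) in *.
  pose proof (Rabs_triang (p1 + p2 + p3) p4). pose proof (Rabs_triang (p1 + p2) p3).
  pose proof (Rabs_triang p1 p2). lra.
Qed.

Lemma U_diff a beta x0 u0 v0 X U V N XN UN VN r k M :
  is_solution a None beta x0 u0 v0 X U V ->
  is_solution a (Some N) beta x0 (trunc N u0) (trunc N v0) XN UN VN ->
  (k < N)%nat -> 0 <= r ->
  (forall s, 0 <= s <= r -> Rabs (X s - XN s) <= M) ->
  Rabs (U r k - UN r k) <= r * (sqrt (a k) * idx k * M) /\
  Rabs (V r k - VN r k) <= r * (sqrt (a k) * idx k * M).
Proof.
  intros [_ [_ [_ [_ [_ [HU HV]]]]]] [_ [_ [_ [_ [_ [HUN HVN]]]]]] Hk Hr HM.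
  assert (Hb : (k <? N)%nat = true) by (apply Nat.ltb_lt; auto).
  destruct (HU r k Hr) as [HUi HUe]. destruct (HUN r k Hr) as [HUNi HUNe].
  destruct (HV r k Hr) as [HVi HVe]. destruct (HVN r k Hr) as [HVNi HVNe].
  unfold proj_coord in *. rewrite Hb in HUNi, HUNe, HVNi, HVNe.
  unfold trunc in HUNe, HVNe. rewrite Hb in HUNe, HVNe.
  pose proof (sqrt_pos (a k)). pose proof (idx_ge1 k).
  split.
  - rewrite HUe, HUNe.
    replace (u0 k + RInt (fun s => F2 a (X s) k) 0 r - (u0 k + RInt (fun s => F2 a (XN s) k) 0 r))
      with (RInt (fun s => F2 a (X s) k - F2 a (XN s) k) 0 r).
    2:{ rewrite (@RInt_minus R_CompleteNormedModule (fun s => F2 a (X s) k) (fun s => F2 a (XN s) k)) by auto. change minus with Rminus. match goal with |- ?A = ?B => change (@eq R A B) end. ring. }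
    replace (r * (sqrt (a k) * idx k * M)) with ((r - 0) * (sqrt (a k) * idx k * M)) by ring.
    apply abs_RInt_le_const; auto.
    apply (@ex_RInt_minus R_NormedModule); auto.
    intros s Hs. unfold F2. rewrite <- Rmult_minus_distr_l, Rabs_mult, (Rabs_pos_eq (sqrt _)) by auto.
    rewrite Rmult_assoc. apply Rmult_le_compat_l; auto.
    eapply Rle_trans. apply cos_lip. rewrite <- Rmult_minus_distr_l, Rabs_mult, (Rabs_pos_eq (idx k)) by lra.
    apply Rmult_le_compat_l; [lra|]. apply HM; auto.
  - rewrite HVe, HVNe.
    replace (v0 k + RInt (fun s => F3 a (X s) k) 0 r - (v0 k + RInt (fun s => F3 a (XN s) k) 0 r))
      with (RInt (fun s => F3 a (X s) k - F3 a (XN s) k) 0 r).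
    2:{ rewrite (@RInt_minus R_CompleteNormedModule (fun s => F3 a (X s) k) (fun s => F3 a (XN s) k)) by auto. change minus with Rminus. match goal with |- ?A = ?B => change (@eq R A B) end. ring. }
    replace (r * (sqrt (a k) * idx k * M)) with ((r - 0) * (sqrt (a k) * idx k * M)) by ring.
    apply abs_RInt_le_const; auto.
    apply (@ex_RInt_minus R_NormedModule); auto.
    intros s Hs. unfold F3.
    replace (- (sqrt (a k) * sin (idx k * X s)) - - (sqrt (a k) * sin (idx k * XN s)))
      with (sqrt (a k) * (sin (idx k * XN s) - sin (idx k * X s))) by ring.
    rewrite Rabs_mult, (Rabs_pos_eq (sqrt _)) by auto.
    rewrite Rmult_assoc. apply Rmult_le_compat_l; auto.
    eapply Rle_trans. apply sin_lip. rewrite <- Rmult_minus_distr_l, Rabs_mult, (Rabs_pos_eq (idx k)) by lra.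
    apply Rmult_le_compat_l; [lra|]. rewrite Rabs_minus_sym. apply HM; auto.
Qed.

Lemma UN_zero a beta x0 u0 v0 N XN UN VN r k :
  is_solution a (Some N) beta x0 (trunc N u0) (trunc N v0) XN UN VN ->
  (N <= k)%nat -> 0 <= r -> UN r k = 0 /\ VN r k = 0.
Proof.
  intros [_ [_ [_ [_ [_ [HUN HVN]]]]]] Hk Hr.
  assert (Hb : (k <? N)%nat = false) by (apply Nat.ltb_ge; auto).
  destruct (HUN r k Hr) as [_ HUNe]. destruct (HVN r k Hr) as [_ HVNe].
  unfold proj_coord, trunc in *. rewrite Hb in HUNe, HVNe.
  rewrite HUNe, HVNe. rewrite (@RInt_const R_CompleteNormedModule).
  change (scal (r - 0) 0) with ((r - 0) * 0). split; ring.
Qed.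

Lemma trunc_abs N u k : Rabs (trunc N u k) <= Rabs (u k).
Proof. unfold trunc. destruct (k <? N)%nat; rewrite ?Rabs_R0; try lra; apply Rabs_pos. Qed.

Lemma lip a beta x0 u0 v0 X U V N XN UN VN T G lam r :
  (forall k, 0 < a k) -> 0 <= T -> 0 <= lam -> ex_series (cc a u0 v0 T) ->
  is_solution a None beta x0 u0 v0 X U V ->
  is_solution a (Some N) beta x0 (trunc N u0) (trunc N v0) XN UN VN ->
  0 <= G -> (forall s, 0 <= s <= T -> Rabs (X s - XN s) <= G * exp (lam * s)) -> 0 <= r <= T ->
  Rabs (F1 a (X r) (U r) (V r) - F1 a (XN r) (UN r) (VN r))
    <= Series (cc a u0 v0 T) * G * exp (lam * r) + Series (tail N (dd a u0 v0 T)).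
Proof.
  intros Ha HT Hlam Hc Hs HsN HG He Hr.
  set (E := G * exp (lam * r)).
  assert (HE0 : 0 <= E) by (unfold E; pose proof (exp_pos (lam * r)); nra).
  assert (HM : forall s, 0 <= s <= r -> Rabs (X s - XN s) <= E).
  { intros s Hs'. eapply Rle_trans. apply He; lra. unfold E.
    apply Rmult_le_compat_l; auto. apply exp_le. nra. }
  assert (Hd := dd_series a u0 v0 T Ha HT Hc).
  assert (Hdpos : forall k, 0 <= dd a u0 v0 T k) by (intro; apply dd_cc; auto).
  destruct (F1_sol_bound a None beta x0 u0 v0 X U V u0 v0 T Ha HT Hs
              ltac:(intro; lra) ltac:(intro; lra) Hd r Hr) as [Hf _].
  destruct (F1_sol_bound a (Some N) beta x0 (trunc N u0) (trunc N v0) XN UN VN u0 v0 T Ha HT HsN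
              (trunc_abs N u0) (trunc_abs N v0) Hd r Hr) as [Hg _].
  unfold F1. rewrite <- Series_minus by auto.
  set (b := fun k => cc a u0 v0 T k * E + tail N (dd a u0 v0 T) k).
  assert (Hb : ex_series b).
  { apply ex_series_plusR. apply ex_series_scal_r; auto. apply tail_ex; auto. }
  assert (HSb : Series b = Series (cc a u0 v0 T) * G * exp (lam * r) + Series (tail N (dd a u0 v0 T))).
  { unfold b. rewrite Series_plus. rewrite Series_scal_r. unfold E; ring.
    apply ex_series_scal_r; auto. apply tail_ex; auto. }
  rewrite <- HSb. apply ser_bound; auto.
  intro k. unfold b, tail.
  pose proof (idx_ge1 k). pose proof (sqrt_pos (a k)). pose proof (Ha k).
  pose proof (sqrt_sqrt (a k) ltac:(lra)) as Hss.
  destruct (k <? N)%nat eqn:Hk.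
  - apply Nat.ltb_lt in Hk.
    destruct (U_diff a beta x0 u0 v0 X U V N XN UN VN r k E Hs HsN Hk (proj1 Hr) HM) as [HdU HdV].
    eapply Rle_trans. apply (diff_term _ _ _ _ _ _ _ _ (Rabs (u0 k) + sqrt (a k) * T) (Rabs (v0 k) + sqrt (a k) * T) E T); try lra.
    + rewrite <- Rmult_minus_distr_l, Rabs_mult, Rabs_pos_eq by lra.
      apply Rmult_le_compat_l; [lra|]. apply HM; lra.
    + apply (sol_U_bound _ _ _ _ _ _ _ _ _ _ T Hs (fun k => Rle_refl _) r k Hr).
    + apply (sol_V_bound _ _ _ _ _ _ _ _ _ _ T Hs (fun k => Rle_refl _) r k Hr).
    + eapply Rle_trans. apply HdU.
      apply Rmult_le_compat_r; [|lra]. apply Rmult_le_pos; [apply Rmult_le_pos|]; lra.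
    + eapply Rle_trans. apply HdV.
      apply Rmult_le_compat_r; [|lra]. apply Rmult_le_pos; [apply Rmult_le_pos|]; lra.
    + unfold cc. right. set (s := sqrt (a k)) in *. rewrite <- Hss. ring.
  - apply Nat.ltb_ge in Hk.
    destruct (UN_zero a beta x0 u0 v0 N XN UN VN r k HsN Hk (proj1 Hr)) as [-> ->].
    replace (idx k * sqrt (a k) * (sin (idx k * XN r) * 0 + cos (idx k * XN r) * 0)) with 0 by ring.
    rewrite Rminus_0_r.
    assert (0 <= cc a u0 v0 T k * E) by (apply Rmult_le_pos; auto; pose proof (dd_cc a u0 v0 T k Ha HT); lra).
    enough (Rabs (idx k * sqrt (a k) * (sin (idx k * X r) * U r k + cos (idx k * X r) * V r k)) <= dd a u0 v0 T k) by lra.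
    eapply Rle_trans. apply term_abs; try lra.
    apply (sol_U_bound _ _ _ _ _ _ _ _ _ _ T Hs (fun k => Rle_refl _) r k Hr).
    apply (sol_V_bound _ _ _ _ _ _ _ _ _ _ T Hs (fun k => Rle_refl _) r k Hr).
    unfold dd. right. set (s := sqrt (a k)) in *. rewrite <- Hss. ring.
Qed.

Lemma ex_series_extR (f g : nat -> R) : (forall n, f n = g n) -> ex_series f -> ex_series g.
Proof. intros. apply (@ex_series_ext R_AbsRing R_NormedModule f g); auto. Qed.

Lemma a_series a : (forall k, 0 < a k) -> ex_series (fun k => idx k ^ 4 * a k) -> ex_series a.
Proof.
  intros Ha Hq.
  apply (ex_series_leR a (fun k => idx k ^ 4 * a k)); auto.
  intro k. pose proof (idx_ge1 k). pose proof (Ha k). split; [lra|].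
  assert (1 <= idx k ^ 4) by (apply pow_R1_Rle; lra). nra.
Qed.

Lemma wtail_ex a w0 T N : (forall k, 0 < a k) -> ex_series (fun k => idx k ^ 4 * a k) -> in_l2 w0 ->
  ex_series (tail N (fun k => 2 * w0 k ^ 2 + 2 * a k * T ^ 2)).
Proof.
  intros Ha Hq Hw. apply tail_ex.
  intro k. pose proof (Ha k). pose proof (pow2_ge_0 (w0 k)). pose proof (pow2_ge_0 T). nra.
  apply ex_series_plusR.
  apply (ex_series_extR (fun k => w0 k ^ 2 * 2)). intros; ring. apply ex_series_scal_r. auto.
  apply ex_series_scal_r. apply (ex_series_extR (fun k => a k * 2)). intros; ring.
  apply ex_series_scal_r. apply a_series; auto.
Qed.

Lemma sq_part (W W' w0 a : nat -> R) N T t Eb :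
  (forall k, 0 < a k) -> 0 <= t <= T -> 0 <= Eb -> ex_series (fun k => idx k ^ 4 * a k) -> in_l2 w0 ->
  (forall k, (k < N)%nat -> Rabs (W k - W' k) <= t * (sqrt (a k) * idx k * Eb)) ->
  (forall k, (N <= k)%nat -> W' k = 0) ->
  (forall k, Rabs (W k) <= Rabs (w0 k) + sqrt (a k) * T) ->
  Series (fun k => (W' k - W k) ^ 2)
    <= T ^ 2 * Eb ^ 2 * Series (fun k => idx k ^ 4 * a k)
       + Series (tail N (fun k => 2 * w0 k ^ 2 + 2 * a k * T ^ 2)).
Proof.
  intros Ha Ht HEb Hq Hw Hlt Hge Hb.
  set (b := fun k => idx k ^ 4 * a k * (T ^ 2 * Eb ^ 2) + tail N (fun k => 2 * w0 k ^ 2 + 2 * a k * T ^ 2) k).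
  assert (Hbx : ex_series b).
  { apply ex_series_plusR. apply ex_series_scal_r; auto. apply wtail_ex; auto. }
  assert (HS : Series b = T ^ 2 * Eb ^ 2 * Series (fun k => idx k ^ 4 * a k)
       + Series (tail N (fun k => 2 * w0 k ^ 2 + 2 * a k * T ^ 2))).
  { unfold b. rewrite Series_plus, Series_scal_r. ring.
    apply ex_series_scal_r; auto. apply wtail_ex; auto. }
  rewrite <- HS. apply Series_le; auto.
  intro k. split. apply pow2_ge_0. unfold b, tail.
  pose proof (idx_ge1 k). pose proof (Ha k). pose proof (sqrt_pos (a k)).
  pose proof (sqrt_sqrt (a k) ltac:(lra)) as Hss.
  assert (Hq0 : 0 <= idx k ^ 4 * a k * (T ^ 2 * Eb ^ 2)).
  { apply Rmult_le_pos. apply Rmult_le_pos; [apply pow_le|]; lra. apply Rmult_le_pos; apply pow2_ge_0. }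
  destruct (k <? N)%nat eqn:Hk.
  - apply Nat.ltb_lt in Hk. specialize (Hlt k Hk). rewrite Rplus_0_r.
    set (s := sqrt (a k)) in *. set (n := idx k) in *.
    rewrite <- Rsqr_pow2, <- Rsqr_neg_minus, Rsqr_pow2, <- pow2_abs.
    assert (K1 : t * (s * n * Eb) <= T * (s * n * Eb)).
    { apply Rmult_le_compat_r; [|lra]. apply Rmult_le_pos; [apply Rmult_le_pos|]; lra. }
    assert (K2 : Rabs (W k - W' k) ^ 2 <= (T * (s * n * Eb)) ^ 2).
    { apply pow_incr. split; [apply Rabs_pos|lra]. }
    eapply Rle_trans. apply K2.
    replace ((T * (s * n * Eb)) ^ 2) with (n ^ 2 * a k * (T ^ 2 * Eb ^ 2)) by (rewrite <- Hss; ring).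
    apply Rmult_le_compat_r. apply Rmult_le_pos; apply pow2_ge_0.
    apply Rmult_le_compat_r; [lra|].
    assert (1 <= n ^ 2) by nra. replace (n ^ 4) with (n ^ 2 * n ^ 2) by ring. nra.
  - apply Nat.ltb_ge in Hk. rewrite (Hge k Hk).
    specialize (Hb k). set (s := sqrt (a k)) in *.
    replace ((0 - W k) ^ 2) with (Rabs (W k) ^ 2) by (rewrite pow2_abs; ring).
    assert (K2 : Rabs (W k) ^ 2 <= (Rabs (w0 k) + s * T) ^ 2).
    { apply pow_incr. split; [apply Rabs_pos|lra]. }
    rewrite <- Hss. rewrite <- (pow2_abs (w0 k)).
    pose proof (pow2_ge_0 (Rabs (w0 k) - s * T)). nra.
Qed.

Lemma pow2_unbounded x : exists m, x <= 2 ^ m.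
Proof.
  destruct (INR_unbounded x) as [m Hm]. exists m.
  assert (forall n, INR n <= 2 ^ n).
  { induction n. simpl; lra. rewrite S_INR. simpl. pose proof (pow_R1_Rle 2 n ltac:(lra)). lra. }
  specialize (H m). lra.
Qed.

Theorem lemma1
  (a : nat -> R)
  (ha_pos : forall k, 0 < a k)
  (ha_sum : ex_series (fun k => (1 + idx k ^ 2) ^ 5 * (a k) ^ 2))
  (x0 : R) (u0 v0 : nat -> R) (hy : in_H x0 u0 v0)
  (Omega : Type) (beta : Omega -> R -> R)
  (hbeta0 : forall w, beta w 0 = 0)
  (hbeta_cont : forall w t, continuous (beta w) t)
  (X : Omega -> R -> R) (U V : Omega -> R -> nat -> R)
  (hY : forall w, is_solution a None (beta w) x0 u0 v0 (X w) (U w) (V w))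
  (XN : nat -> Omega -> R -> R) (UN VN : nat -> Omega -> R -> nat -> R)
  (hYN : forall N w, (1 <= N)%nat ->
     is_solution a (Some N) (beta w) x0 (trunc N u0) (trunc N v0)
                 (XN N w) (UN N w) (VN N w)) :
  forall T, 0 < T -> forall w,
    forall eps, 0 < eps -> exists N0 : nat, forall N, (N0 <= N)%nat ->
      forall t, 0 <= t <= T ->
        Hdist2 (XN N w t) (UN N w t) (VN N w t) (X w t) (U w t) (V w t) < eps.
Proof.
  intros T HT w eps Heps.
  destruct hy as [Hu0 Hv0].
  pose proof (hY w) as Hs.
  assert (HT0 : 0 <= T) by lra.
  pose proof (q_series a ha_pos ha_sum) as Hq.
  pose proof (cc_series a u0 v0 T ha_pos HT0 Hq Hu0 Hv0) as Hc.
  pose proof (dd_series a u0 v0 T ha_pos HT0 Hc) as Hd.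
  assert (Hdpos : forall k, 0 <= dd a u0 v0 T k) by (intro; apply dd_cc; auto).
  assert (Hcpos : forall k, 0 <= cc a u0 v0 T k) by (intro; pose proof (dd_cc a u0 v0 T k ha_pos HT0); lra).
  assert (Hqpos : forall k, 0 <= idx k ^ 4 * a k) by (intro k; pose proof (ha_pos k); pose proof (idx_ge1 k); apply Rmult_le_pos; [apply pow_le|]; lra).
  set (C := Series (cc a u0 v0 T)). assert (HC : 0 <= C) by (apply Series_nonneg; auto).
  set (Dd := Series (dd a u0 v0 T)). assert (HDd : 0 <= Dd) by (apply Series_nonneg; auto).
  set (Q := Series (fun k => idx k ^ 4 * a k)). assert (HQ : 0 <= Q) by (apply Series_nonneg; auto).
  set (lam := 2 * C + 1).
  set (G0 := 2 * T * Dd). assert (HG0 : 0 <= G0) by (unfold G0; nra).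
  set (K := exp (lam * T)). assert (HK : 1 <= K) by (apply exp_ge1; unfold lam; nra).
  set (B := 1 + 2 * T ^ 2 * Q). assert (HB : 1 <= B) by (unfold B; pose proof (pow2_ge_0 T); nra).
  set (Z := (1 + 2 * T) ^ 2 * K ^ 2 * B).
  assert (HZ : 0 <= Z) by (unfold Z; apply Rmult_le_pos; [apply Rmult_le_pos|]; try apply pow2_ge_0; lra).
  set (delta := Rmin 1 (eps / (2 * Z + 1))).
  assert (Hdel0 : 0 < delta).
  { unfold delta. apply Rmin_glb_lt. lra. apply Rdiv_lt_0_compat; lra. }
  assert (Hdel1 : delta <= 1) by apply Rmin_l.
  assert (Hdel2 : delta * (2 * Z + 1) <= eps).
  { unfold delta. pose proof (Rmin_r 1 (eps / (2 * Z + 1))).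
    apply Rle_trans with (eps / (2 * Z + 1) * (2 * Z + 1)).
    apply Rmult_le_compat_r; lra. right; field; lra. }
  set (tu := fun k => 2 * u0 k ^ 2 + 2 * a k * T ^ 2).
  set (tv := fun k => 2 * v0 k ^ 2 + 2 * a k * T ^ 2).
  assert (Htu : forall k, 0 <= tu k) by (intro k; unfold tu; pose proof (ha_pos k); pose proof (pow2_ge_0 (u0 k)); pose proof (pow2_ge_0 T); nra).
  assert (Htv : forall k, 0 <= tv k) by (intro k; unfold tv; pose proof (ha_pos k); pose proof (pow2_ge_0 (v0 k)); pose proof (pow2_ge_0 T); nra).
  assert (Htux : ex_series tu).
  { pose proof (wtail_ex a u0 T 0 ha_pos Hq Hu0) as H. apply (ex_series_extR _ _ (fun n => eq_refl) ) in H || idtac.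
    apply (ex_series_extR (tail 0 tu)); auto. }
  assert (Htvx : ex_series tv).
  { pose proof (wtail_ex a v0 T 0 ha_pos Hq Hv0) as H.
    apply (ex_series_extR (tail 0 tv)); auto. }
  destruct (tail_small _ Hdpos Hd delta Hdel0) as [N1 HN1].
  destruct (tail_small _ Htu Htux (eps / 4) ltac:(lra)) as [N2 HN2].
  destruct (tail_small _ Htv Htvx (eps / 4) ltac:(lra)) as [N3 HN3].
  destruct (pow2_unbounded (G0 / delta)) as [m Hm].
  exists (Nat.max 1 (Nat.max N1 (Nat.max N2 N3))).
  intros N HN t Ht.
  assert (HN1' : (1 <= N)%nat) by lia.
  pose proof (hYN N w HN1') as HsN.
  specialize (HN1 N ltac:(lia)). specialize (HN2 N ltac:(lia)). specialize (HN3 N ltac:(lia)).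
  set (tau := Series (tail N (dd a u0 v0 T))).
  assert (Htau : 0 <= tau) by (apply Series_nonneg; [intro; apply tail_le; auto | apply tail_ex; auto]).
  set (e := fun s => X w s - XN N w s).
  set (D := fun r => F1 a (X w r) (U w r) (V w r) - F1 a (XN N w r) (UN N w r) (VN N w r)).
  destruct Hs as [HsC [HsX0 [HsU0 [HsV0 [HsX [HsU HsV]]]]]].
  pose proof HsN as HsN'.
  destruct HsN' as [HNC [HNX0 [HNU0 [HNV0 [HNX [HNU HNV]]]]]].
  assert (HD : forall t, 0 <= t <= T -> ex_RInt D 0 t /\ e t = RInt D 0 t).
  { intros s Hs'. destruct (HsX s (proj1 Hs')) as [I1 E1]. destruct (HNX s (proj1 Hs')) as [I2 E2].
    split. apply (@ex_RInt_minus R_NormedModule); auto.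
    unfold e, D. rewrite E1, E2.
    rewrite (@RInt_minus R_CompleteNormedModule (fun r => F1 a (X w r) (U w r) (V w r))
               (fun r => F1 a (XN N w r) (UN N w r) (VN N w r))) by auto.
    change minus with Rminus. match goal with |- ?A = ?B => change (@eq R A B) end. ring. }
  assert (He0 : forall t, 0 <= t <= T -> Rabs (e t) <= G0).
  { intros s Hs'. destruct (HsX s (proj1 Hs')) as [I1 E1]. destruct (HNX s (proj1 Hs')) as [I2 E2].
    unfold e. rewrite E1, E2.
    replace (x0 + RInt (fun s0 => F1 a (X w s0) (U w s0) (V w s0)) 0 s + beta w s -
             (x0 + RInt (fun s0 => F1 a (XN N w s0) (UN N w s0) (VN N w s0)) 0 s + beta w s))
      with (RInt (fun s0 => F1 a (X w s0) (U w s0) (V w s0)) 0 s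
            + - RInt (fun s0 => F1 a (XN N w s0) (UN N w s0) (VN N w s0)) 0 s) by ring.
    eapply Rle_trans. apply Rabs_triang. rewrite Rabs_Ropp.
    assert (A1 : Rabs (RInt (fun s0 => F1 a (X w s0) (U w s0) (V w s0)) 0 s) <= (s - 0) * Dd).
    { apply abs_RInt_le_const; auto. lra. intros r Hr.
      apply (F1_sol_bound a None (beta w) x0 u0 v0 (X w) (U w) (V w) u0 v0 T ha_pos HT0 (hY w)
              (fun k => Rle_refl _) (fun k => Rle_refl _) Hd r ltac:(lra)). }
    assert (A2 : Rabs (RInt (fun s0 => F1 a (XN N w s0) (UN N w s0) (VN N w s0)) 0 s) <= (s - 0) * Dd).
    { apply abs_RInt_le_const; auto. lra. intros r Hr.
      apply (F1_sol_bound a (Some N) (beta w) x0 (trunc N u0) (trunc N v0) (XN N w) (UN N w) (VN N w) u0 v0 T ha_pos HT0 HsN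
              (trunc_abs N u0) (trunc_abs N v0) Hd r ltac:(lra)). }
    unfold G0. assert (s * Dd <= T * Dd) by (apply Rmult_le_compat_r; lra). lra. }
  assert (Hlip : forall G, 0 <= G -> (forall s, 0 <= s <= T -> Rabs (e s) <= G * exp ((2*C+1) * s)) ->
     forall r, 0 <= r <= T -> Rabs (D r) <= C * G * exp ((2*C+1) * r) + tau).
  { intros G HG HeG r Hr. unfold D, C, tau.
    apply (lip a (beta w) x0 u0 v0 (X w) (U w) (V w) N (XN N w) (UN N w) (VN N w) T G (2*C+1) r); auto.
    lra. }
  pose proof (gronwall_abs T C tau G0 e D HT HC Htau HG0 HD He0 Hlip m) as Hgr.
  set (Eb := (G0 / 2 ^ m + 2 * T * tau) * K).
  assert (HEb0 : 0 <= Eb).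
  { unfold Eb. apply Rmult_le_pos; [|lra].
    assert (0 < 2 ^ m) by (apply pow_lt; lra).
    assert (0 <= G0 / 2 ^ m) by (apply Rdiv_le_0_compat; lra). nra. }
  assert (HeEb : forall s, 0 <= s <= T -> Rabs (X w s - XN N w s) <= Eb).
  { intros s Hs'. eapply Rle_trans. apply (Hgr s Hs'). unfold Eb, K.
    apply Rmult_le_compat_l.
    assert (0 < 2 ^ m) by (apply pow_lt; lra).
    assert (0 <= G0 / 2 ^ m) by (apply Rdiv_le_0_compat; lra). nra.
    apply exp_le. unfold lam. nra. }
  assert (HUp : Series (fun k => (UN N w t k - U w t k) ^ 2) <= T ^ 2 * Eb ^ 2 * Q + Series (tail N tu)).
  { apply (sq_part (U w t) (UN N w t) u0 a N T t Eb); auto.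
    - intros k Hk. apply (U_diff a (beta w) x0 u0 v0 (X w) (U w) (V w) N (XN N w) (UN N w) (VN N w) t k Eb (hY w) HsN Hk (proj1 Ht)).
      intros s Hs'; apply HeEb; lra.
    - intros k Hk. apply (UN_zero a (beta w) x0 u0 v0 N (XN N w) (UN N w) (VN N w) t k HsN Hk (proj1 Ht)).
    - intro k. apply (sol_U_bound _ _ _ _ _ _ _ _ _ _ T (hY w) (fun k => Rle_refl _) t k Ht). }
  assert (HVp : Series (fun k => (VN N w t k - V w t k) ^ 2) <= T ^ 2 * Eb ^ 2 * Q + Series (tail N tv)).
  { apply (sq_part (V w t) (VN N w t) v0 a N T t Eb); auto.
    - intros k Hk. apply (U_diff a (beta w) x0 u0 v0 (X w) (U w) (V w) N (XN N w) (UN N w) (VN N w) t k Eb (hY w) HsN Hk (proj1 Ht)).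
      intros s Hs'; apply HeEb; lra.
    - intros k Hk. apply (UN_zero a (beta w) x0 u0 v0 N (XN N w) (UN N w) (VN N w) t k HsN Hk (proj1 Ht)).
    - intro k. apply (sol_V_bound _ _ _ _ _ _ _ _ _ _ T (hY w) (fun k => Rle_refl _) t k Ht). }
  assert (HX : (XN N w t - X w t) ^ 2 <= Eb ^ 2).
  { rewrite <- (pow2_abs (XN N w t - X w t)). apply pow_incr. split. apply Rabs_pos.
    rewrite Rabs_minus_sym. apply HeEb; auto. }
  assert (Hm2 : G0 / 2 ^ m <= delta).
  { assert (0 < 2 ^ m) by (apply pow_lt; lra).
    apply Rmult_le_reg_r with (2 ^ m); auto. unfold Rdiv. rewrite Rmult_assoc, Rinv_l by lra.
    apply Rmult_le_reg_r with (/ delta). apply Rinv_0_lt_compat; lra.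
    replace (delta * 2 ^ m * / delta) with (2 ^ m) by (field; lra). lra. }
  assert (HEbd : Eb <= delta * (1 + 2 * T) * K).
  { unfold Eb. apply Rmult_le_compat_r; [lra|]. unfold tau in *. nra. }
  assert (HEb2 : Eb ^ 2 * B <= delta * Z).
  { unfold Z. apply Rle_trans with ((delta * (1 + 2 * T) * K) ^ 2 * B).
    apply Rmult_le_compat_r; [lra|]. apply pow_incr; lra.
    replace ((delta * (1 + 2 * T) * K) ^ 2 * B) with (delta * (delta * ((1 + 2 * T) ^ 2 * K ^ 2 * B))) by ring.
    apply Rmult_le_compat_l; [lra|]. fold Z. nra. }
  unfold Hdist2.
  assert (delta * Z < eps / 2).
  { assert (delta * Z * 2 < eps) by nra. lra. }
  unfold B in HEb2. fold tu tv in HUp, HVp.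
  nra.
Qed.
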